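(* Let $A$ be a $d\times n$ matrix with integer entries and $\ker(A)\cap\mathbb R^{n}_{\ge0}=\{\mathbf 0\}$. Let $\mathbf c$ be a column of $A$, let $\mathbf c'\in\mathbb Z^{d}$, and let $A'$ be the matrix obtained from $A$ by replacing the column $\mathbf c$ with $\mathbf c'$. If $p_{A'}(\mathbf c)\ge p_A(\mathbf c)$, then $p_{A'}(\mathbf b)\ge p_A(\mathbf b)$ for all $\mathbf b\in\mathbb Z^d_{\ge0}$.
   Context: For an integer matrix $M$ with $r$ columns and $\mathbf b$ a vector, $p_M(\mathbf b)=\#\{\mathbf x\in\mathbb Z^r_{\ge0}:M\mathbf x=\mathbf b\}$ (the vector partition function; counted as a cardinality). *)

(* Defs.v *)
From HB Require Import structures.
From mathcomp Require Import all_boot all_order all_algebra.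
From mathcomp Require Import boolp classical_sets cardinality reals.
From mathcomp Require Import Rstruct.
Set Implicit Arguments. Unset Strict Implicit. Unset Printing Implicit Defensive.
Import Order.TTheory GRing.Theory Num.Theory.
Local Open Scope ring_scope.
Local Open Scope classical_set_scope.

(* The solution set {x in Z^r_{>=0} : M x = b}; the vector partition function
   p_M(b) is its cardinality, compared via the cardinal order #<=. *)
Definition vpsol (d r : nat) (M : 'M[int]_(d, r)) (b : 'cV[int]_d)
  : set 'cV[int]_r :=
  [set x : 'cV[int]_r | (forall i, 0 <= x i 0) /\ M *m x = b].

Definition replace_col (d n : nat) (A : 'M[int]_(d, n)) (j : 'I_n)
  (c' : 'cV[int]_d) : 'M[int]_(d, n) :=
  \matrix_(i < d, k < n) (if k == j then c' i 0 else A i k).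

Definition pointed_kernel (d n : nat) (A : 'M[int]_(d, n)) : Prop :=
  forall x : 'cV[Rdefinitions.R]_n,
    (forall i, 0 <= x i 0) ->
    map_mx (fun z : int => z%:~R) A *m x = 0 -> x = 0.

(* Main.v *)
Require Import Defs.
From HB Require Import structures.
From mathcomp Require Import all_boot all_order all_algebra.
From mathcomp Require Import boolp classical_sets functions cardinality reals.
From mathcomp Require Import zify Rstruct ring.
Import Order.TTheory GRing.Theory Num.Theory.
Local Open Scope ring_scope.
Local Open Scope card_scope.
Local Open Scope classical_set_scope.
Lemma le_of_inj T U (A : set T) (B : set U) (f : T -> U) :
  (forall x, A x -> B (f x)) ->
  (forall x y, A x -> A y -> f x = f y -> x = y) -> A #<= B.
Proof.
move=> fAB finj; apply/card_leP/injfunPex.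
exists (fun a : A => exist _ (f (sval a)) (mem_set (fAB _ (set_mem (svalP a))))).
  move=> a _; done.
move=> a b _ _ /(congr1 sval) /= /finj h; apply: val_inj; apply: h; [exact: (set_mem (svalP a)) | exact: (set_mem (svalP b))].
Qed.

Lemma inj_of_le T U (A : set T) (B : set U) :
  A #<= B -> exists f : A -> B, injective f.
Proof.
move=> /card_leP [g]; exists (fun x => g x) => a b e.
by apply: (@inj _ _ _ g) => //; rewrite inE.
Qed.
Local Open Scope nat_scope.
Lemma mono_sub (v : nat -> nat) :
  exists psi : nat -> nat, (forall a b, a < b -> psi a < psi b) /\
     (forall a b, a <= b -> v (psi a) <= v (psi b)).
Proof.
have nxt : forall m, {i | m < i /\ forall k, m < k -> v i <= v k}.
  move=> m; apply: cid.
  pose P := fun x => `[< exists k, m < k /\ v k = x >].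
  have exP : exists x, P x by exists (v m.+1); apply/asboolP; exists m.+1.
  case: (ex_minnP exP) => x /asboolP [k [mk vk]] Hmin.
  exists k; split => // k' mk'; rewrite vk; apply: Hmin; apply/asboolP; by exists k'.
pose f m := sval (nxt m).
have fP m : m < f m /\ forall k, m < k -> v (f m) <= v k by exact: (svalP (nxt m)).
exists (fun a => iter a.+1 f 0); split.
  move=> a b; apply: (@homo_ltn _ (fun a => iter a.+1 f 0) (fun x y => x < y)).
    by move=> ? ? ? ; apply: ltn_trans.
  by move=> i /=; case: (fP (f (iter i f 0))).
move=> a b; apply: (@homo_leq _ (fun a => v (iter a.+1 f 0)) (fun x y => x <= y)).
- by [].
- by move=> ? ? ?; apply: leq_trans.
move=> i /=.
have [h1 _] := fP (f (iter i f 0)).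
have [h2 h3] := fP (iter i f 0).
apply: h3; exact: ltn_trans h2 h1.
Qed.

Lemma dickson n (u : nat -> 'I_n -> nat) :
  exists i k, i < k /\ forall t, u i t <= u k t.
Proof.
suff: forall l : seq 'I_n, exists phi : nat -> nat,
  (forall a b, a < b -> phi a < phi b) /\
  forall t, t \in l -> forall a b, a <= b -> u (phi a) t <= u (phi b) t.
  case/(_ (enum 'I_n)) => phi [H1 H2]; exists (phi 0), (phi 1); split; first exact: H1.
  by move=> t; apply: H2; rewrite ?mem_enum.
elim=> [|t l [phi [Hphi Hmon]]]; first by exists id.
have [psi [Hpsi Hv]] := mono_sub (fun a => u (phi a) t).
have Hpsiw a b : a <= b -> psi a <= psi b.
  by rewrite leq_eqVlt => /orP [/eqP -> //| /Hpsi /ltnW].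
exists (fun a => phi (psi a)); split; first by move=> a b /Hpsi /Hphi.
move=> t'; rewrite inE => /orP [/eqP -> | Ht'] a b ab; first exact: Hv.
by apply: Hmon => //; apply: Hpsiw.
Qed.
Local Close Scope nat_scope.

Lemma repl_mul d n (A : 'M[int]_(d, n)) j c' (x : 'cV[int]_n) :
  replace_col A j c' *m x = A *m x + (x j 0) *: (c' - col j A).
Proof.
have -> : replace_col A j c' = A + (c' - col j A) *m delta_mx 0 j.
  apply/matrixP => i k; rewrite !mxE big_ord1 !mxE.
  case: eqP => [->|_]; rewrite ?mulr1 ?mulr0 ?addr0 //.
  by rewrite addrCA subrr addr0.
by rewrite mulmxDl -mulmxA -rowE [row j x]mx11_scalar mxE mul_mx_scalar.
Qed.

Lemma kerZ d n (A : 'M[int]_(d, n)) (z : 'cV[int]_n) :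
  pointed_kernel A -> (forall i, 0 <= z i 0) -> A *m z = 0 -> z = 0.
Proof.
move=> PK zp Az.
have H := PK (map_mx (fun z : int => (z%:~R : Rdefinitions.R)) z).
have {H} H : map_mx (fun z : int => (z%:~R : Rdefinitions.R)) z = 0.
  apply: H; first by move=> i; rewrite mxE ler0z.
  by rewrite -map_mxM Az map_mx0.
apply/matrixP => a b; have := congr1 (fun M : 'M[Rdefinitions.R]_(n,1) => M a b) H; rewrite !mxE.
  by move/eqP; rewrite intr_eq0 => /eqP.
Qed.

Lemma step3 d n (A : 'M[int]_(d, n)) j c' (x0 : 'cV[int]_n) :
  vpsol (replace_col A j c') (col j A) x0 -> 0 < x0 j 0 ->
  forall b, vpsol A b #<= vpsol (replace_col A j c') b.
Proof.
move=> [x0p Ax0] x0j b.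
pose e := delta_mx j 0 : 'cV[int]_n.
pose w := x0 - e.
have wp t : 0 <= w t 0.
  rewrite !mxE eqxx andbT; case: (t =P j) => [->|_] /=.
    by rewrite subr_ge0.
  by rewrite subr0.
have wj : w j 0 = x0 j 0 - 1 by rewrite !mxE !eqxx.
have zj (x : 'cV[int]_n) : (x + x j 0 *: w) j 0 = x j 0 * x0 j 0.
  rewrite mxE [in X in _ + X]mxE wj; ring.
have Ax0' : A *m x0 = col j A - x0 j 0 *: (c' - col j A).
  by move: Ax0; rewrite repl_mul => E; rewrite -{1}E addrK.
have L := (@le_of_inj _ _ (vpsol A b) (vpsol (replace_col A j c') b) (fun x : 'cV[int]_n => x + (x j 0) *: w)).
apply: L.
- move=> x [xp Ax]; split.
  + move=> t; rewrite !mxE; apply: addr_ge0 => //; apply: mulr_ge0 => //.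
    by have := wp t; rewrite !mxE.
  + rewrite repl_mul zj mulmxDr Ax -scalemxAr mulmxBr Ax0' -colE.
    by rewrite [col j A - _ - col j A]addrAC subrr add0r scalerN scalerA subrK.
- move=> x y _ _ E.
  have := congr1 (fun M : 'M[int]_(n,1) => M j 0) E; rewrite /= !zj => /mulIf h.
  have {}h := h (lt0r_neq0 x0j); rewrite h in E; exact: addIr E.
Qed.

Theorem mainTheorem16 (d n : nat) (A : 'M[int]_(d, n)) (j : 'I_n)
  (c' : 'cV[int]_d) :
  pointed_kernel A ->
  vpsol A (col j A) #<= vpsol (replace_col A j c') (col j A) ->
  forall b : 'cV[int]_d, (forall i, 0 <= b i 0) ->
    vpsol A b #<= vpsol (replace_col A j c') b.
Proof.
move=> PK Hle b _.
have [[x0 [Hx0 Hpos]]|Hno] :=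
  pselect (exists x0, vpsol (replace_col A j c') (col j A) x0 /\ 0 < x0 j 0).
  exact: step3 Hx0 Hpos _.
exfalso.
set c := col j A in Hle Hno *.
set A' := replace_col A j c' in Hle Hno *.
have Hno' x : vpsol A' c x -> x j 0 = 0.
  move=> Hx; have [p _] := Hx; apply/eqP; rewrite eq_le p andbT leNgt.
  by apply/negP => h; apply: Hno; exists x.
have back x : vpsol A' c x -> vpsol A c x.
  move=> Hx; have h0 := Hno' x Hx; case: Hx => p E; split => //.
  by move: E; rewrite /A' repl_mul h0 scale0r addr0.
have [g ginj] := inj_of_le _ _ _ _ Hle.
pose h x := match pselect (vpsol A c x) with
  | left H => sval (g (exist _ x (mem_set H))) | right _ => 0 end.
have hP x : vpsol A c x -> vpsol A' c (h x).
  move=> H; rewrite /h; case: pselect => // H'.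
  exact: set_mem (svalP (g _)).
have hinj x y : vpsol A c x -> vpsol A c y -> h x = h y -> x = y.
  move=> Hx Hy; rewrite /h; case: pselect => // Hx'; case: pselect => // Hy' E.
  by have := ginj _ _ (val_inj E) => /(congr1 sval).
pose e := delta_mx j 0 : 'cV[int]_n.
have eP : vpsol A c e.
  split; first by move=> t; rewrite mxE; case: (_ && _).
  by rewrite /c colE.
pose s m := iter m h e.
have sP m : vpsol A c (s m).
  by elim: m => // m IH; exact: back (hP _ IH).
have sj m : s (m.+1)%N j 0 = 0 := Hno' _ (hP _ (sP m)).
have sd i k : (i < k)%N -> s i <> s k.
  elim: i k => [|i IH] [|k] //= ik.
    by move=> E; have := sj k; rewrite -[s _]/(h (s k)) -E /s /e /= mxE !eqxx.
  by move=> E; apply: (IH k ik); exact: hinj (sP i) (sP k) E.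
have [i [k [ik Hik]]] := dickson _ (fun m t => absz (s m t 0)).
apply: (sd i k ik).
have : s k - s i = 0.
  apply: (kerZ _ _ _ _ PK).
    move=> t; rewrite !mxE subr_ge0; have := Hik t.
    case: (sP i) => pi _; case: (sP k) => pk _.
    by rewrite -lez_nat !abszE !ger0_norm.
  rewrite mulmxBr; case: (sP k) => _ ->; case: (sP i) => _ ->.
  by rewrite subrr.
by move/eqP; rewrite subr_eq0 => /eqP ->.
Qed.
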